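(* Let $q\equiv 3 \pmod 4$ be a prime power. In $G=\mathbb{Z}_2\times(\mathbb{F}_{q^2},+)$ define $B_0=(\{0\}\times D_0)\cup(\{1\}\times(\mathbb{F}_{q^2}\setminus D_0))$ and $B_1=(\{0\}\times D_2)\cup(\{1\}\times D_2)$. Then $|B_0|=q^2$, $|B_1|=q^2-1$, and in the group ring $\mathbb{Z}[G]$, $$\sum_{i=0,1}B_iB_i^{(-1)}=\{0\}\times\Big((q^2-2)\,\mathbb{F}_{q^2}^\ast+(2q^2-1)\cdot 0_{\mathbb{F}_{q^2}}\Big)+\{1\}\times\Big(2D_0-2D_2+(q^2-1)\,\mathbb{F}_{q^2}\Big).$$
   Context: Let $\omega$ be a primitive element of $\mathbb{F}_{q^2}$. For a positive divisor $N$ of $q^2-1$, the $N$-th cyclotomic classes are $C_i^{(N,q^2)}=\omega^i\langle\omega^N\rangle$ (index $i$ taken mod $N$). Set $D_i=C_i^{(4,q^2)}\cup C_{i+1}^{(4,q^2)}$ for $i=0,1,2,3$. For an additive abelian group $G$, a subset $X\subseteq G$ is identified with the group ring element $\sum_{x\in X}x\in\mathbb{Z}[G]$; $X^{(-1)}=\{-x:x\in X\}$; $G^\ast=G\setminus\{0_G\}$. For $X\in\mathbb{Z}[\mathbb{F}_{q^2}]$ and $\epsilon\in\mathbb{Z}_2$, $\{\epsilon\}\times X$ denotes the element of $\mathbb{Z}[\mathbb{Z}_2\times\mathbb{F}_{q^2}]$ obtained by replacing each $x$ with $(\epsilon,x)$ (coefficients kept), and $c\cdot 0_{\mathbb{F}_{q^2}}$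 denotes $c$ times the identity element. *)

(* Defs.v *)
From HB Require Import structures.
From mathcomp Require Import all_boot all_order all_algebra all_field.
Set Implicit Arguments. Unset Strict Implicit. Unset Printing Implicit Defensive.
Import GRing.Theory Num.Theory.
Local Open Scope ring_scope.

(* Elements of the group ring Z[G] of a finite additive group G, represented
   as their coefficient functions G -> int. *)
Definition grring (G : finZmodType) := G -> int.

(* a subset X, identified with sum_{x in X} x *)
Definition grset (G : finZmodType) (X : {set G}) : grring G :=
  fun g => ((g \in X) : nat)%:Z.

Definition grzero (G : finZmodType) : grring G := fun g => ((g == 0) : nat)%:Z.

Definition gradd (G : finZmodType) (a b : grring G) : grring G := fun g => a g + b g.
Definition grscale (G : finZmodType) (c : int) (a : grring G) : grring G :=
  fun g => c * a g.
Definition grmul (G : finZmodType) (a b : grring G) : grring G :=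
  fun g => \sum_(h : G) a h * b (g - h).
Definition grinv (G : finZmodType) (a : grring G) : grring G := fun g => a (- g).

Definition G2 (F : finFieldType) := ('Z_2 * F)%type.
HB.instance Definition _ F := GRing.Zmodule.on (G2 F).
HB.instance Definition _ F := Finite.on (G2 F).

(* {eps} x X, for X in Z[F], as an element of Z[Z_2 x F] *)
Definition grembed (F : finFieldType) (eps : 'Z_2) (a : grring F)
  : grring (G2 F) :=
  fun p => if p.1 == eps then a p.2 else 0.

(* N-th cyclotomic class C_i^{(N)} = w^i <w^N> in a finite field F, for w primitive *)
Definition cyclass (F : finFieldType) (w : F) (N i : nat) : {set F} :=
  [set x | [exists k : 'I_#|F|, x == w ^+ (N * k + i)]].

Definition Dcl (F : finFieldType) (w : F) (i : nat) : {set F} :=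
  cyclass w 4 (i %% 4) :|: cyclass w 4 (i.+1 %% 4).

Definition B0 (F : finFieldType) (w : F) : {set G2 F} :=
  setX [set 0] (Dcl w 0) :|: setX [set 1] (~: Dcl w 0).
Definition B1 (F : finFieldType) (w : F) : {set G2 F} :=
  setX [set 0] (Dcl w 2) :|: setX [set 1] (Dcl w 2).

(* Main.v *)
Require Import Defs.
From HB Require Import structures.
From mathcomp Require Import all_boot all_order all_algebra all_field.
From mathcomp Require Import zify ring lra.
Import GRing.Theory Num.Theory.
Local Open Scope ring_scope.

Definition Tset n : {set 'I_n.+1 * 'I_n.+1} :=
  [set ab | (ab.1 != ord0) && (ab.2 != ord0) && (ab.1 != ab.2)].

Lemma pair_sum n (f : 'I_n.+1 -> int) :
  \sum_(ab in Tset n) f ab.1 * f ab.2 =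
  (\sum_(a | a != ord0) f a) ^+ 2 - \sum_(a | a != ord0) f a ^+ 2.
Proof.
set S := \sum_(a | a != ord0) f a.
have inner : forall a : 'I_n.+1, a != ord0 ->
  \sum_(b | (a != ord0) && (b != ord0) && (a != b)) f a * f b = f a * S - f a ^+ 2.
  move=> a a0. rewrite -mulr_sumr.
  have -> : S = f a + \sum_(b | (b != ord0) && (b != a)) f b by rewrite /S (bigD1 a).
  rewrite mulrDr expr2 [f a * f a + _]addrC addrK.
  congr (_ * _). apply: eq_bigl => b. by rewrite a0 /= [a == b]eq_sym.
rewrite (eq_bigl (fun ab => (ab.1 != ord0) && ((ab.1 != ord0) && (ab.2 != ord0) && (ab.1 != ab.2)))); last first.
  move=> [a b]; rewrite inE /=. by case: (a != ord0).
rewrite -(pair_big_dep (fun a : 'I_n.+1 => a != ord0) (fun a b => (a != ord0) && (b != ord0) && (a != b)) (fun a b => f a * f b)) /=.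
rewrite (eq_bigr (fun a => f a * S - f a ^+ 2)); last by move=> a a0; apply: inner.
by rewrite sumrB -mulr_suml expr2.
Qed.

Lemma splitG2 (F : finFieldType) (f : G2 F -> int) :
  \sum_(h : G2 F) f h = \sum_(x : F) f (0, x) + \sum_(x : F) f (1, x).
Proof.
transitivity (\sum_(p : 'Z_2 * F) (fun (a : 'Z_2) (x : F) => f (a, x)) p.1 p.2).
  by apply: eq_bigr => -[a x].
rewrite -(pair_bigA _ (fun (a : 'Z_2) (x : F) => f (a, x))) /= big_ord_recl big_ord1 /=.
have -> : (lift ord0 ord0 : 'Z_2) = 1 by apply: val_inj.
have -> : (ord0 : 'Z_2) = 0 by apply: val_inj.
by [].
Qed.

Lemma B0m0 (F : finFieldType) (w : F) (x : F) : ((0, x) \in B0 w) = (x \in Dcl w 0).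
Proof. by rewrite /B0 in_setU !in_setX !in_set1 /= orbF. Qed.
Lemma B0m1 (F : finFieldType) (w : F) (x : F) : ((1, x) \in B0 w) = (x \notin Dcl w 0).
Proof. by rewrite /B0 in_setU !in_setX !in_set1 /= in_setC. Qed.
Lemma B1m (F : finFieldType) (w : F) (a : 'Z_2) (x : F) : ((a, x) \in B1 w) = (x \in Dcl w 2).
Proof. rewrite /B1 in_setU !in_setX !in_set1 /=. case: a => -[|[|//]] ? /=; by rewrite ?andbF ?orbF. Qed.

Lemma sub_pair (F : finFieldType) (a e : 'Z_2) (x y : F) :
  - ((e, y) - (a, x) : G2 F) = (a - e, x - y).
Proof. rewrite opprB. by []. Qed.

Section Main.
Variables (q : nat) (F : finFieldType) (w : F) (p kk : nat).
Hypotheses (hp : prime p) (hk : (0 < kk)%N) (hqp : q = (p ^ kk)%N)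
  (hq4 : (q %% 4 = 3)%N) (hF : #|F| = (q ^ 2)%N)
  (hw : (#|F|.-1).-primitive_root w).

Local Notation N := (#|F|.-1).

Lemma q_pos : (0 < q)%N. Proof. lia. Qed.

Lemma N_eq : N = ((q - 1) * (q + 1))%N.
Proof. rewrite hF. have := q_pos. nia. Qed.

Lemma q1_eq : (q + 1 = 4 * ((q + 1) %/ 4))%N. Proof. lia. Qed.

Lemma dvd_q1 : (4 %| q + 1)%N. Proof. by rewrite q1_eq dvdn_mulr. Qed.

Lemma dvd4N : (4 %| N)%N. Proof. by rewrite N_eq dvdn_mull // dvd_q1. Qed.

Lemma dvdq1N : (q + 1 %| N)%N. Proof. by rewrite N_eq dvdn_mull. Qed.

Lemma N_gt0 : (0 < N)%N. Proof. rewrite N_eq. lia. Qed.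

Lemma w_neq0 : w != 0.
Proof.
apply/eqP => w0. have := prim_expr_order hw. rewrite w0 expr0n.
have := N_gt0. case: N => // n _ /eqP. by rewrite eq_sym oner_eq0.
Qed.

Lemma unitN {x : F} : x != 0 -> x ^+ N = 1.
Proof.
move=> x0. have := expf_card x. have hN : #|F| = N.+1 by rewrite prednK // hF; nia.
rewrite hN exprS => H; apply: (mulfI x0); by rewrite H mulr1.
Qed.

Definition lg (x : F) : nat :=
  if [pick i : 'I_N | w ^+ i == x] is Some i then val i else 0.

Lemma lgP {x : F} : x != 0 -> w ^+ (lg x) = x /\ (lg x < N)%N.
Proof.
move=> x0. rewrite /lg. case: pickP => [i /eqP Hi | H]; first by split=> //; exact: ltn_ord.
have [i Hi] := prim_rootP hw (unitN x0). by have := H i; rewrite Hi eqxx.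
Qed.

Lemma lg_exp j : (j < N)%N -> lg (w ^+ j) = j.
Proof.
move=> jN. have [h1 h2] := lgP (expf_neq0 j w_neq0).
move/eqP: h1. rewrite (eq_prim_root_expr hw) => /eqP.
by rewrite !modn_small.
Qed.

Lemma lgM {x y : F} : x != 0 -> y != 0 -> lg (x * y) = ((lg x + lg y) %% N)%N.
Proof.
move=> x0 y0. have [h1 _] := lgP x0. have [h2 _] := lgP y0.
rewrite -{1}h1 -{1}h2 -exprD -(prim_expr_mod hw) lg_exp //.
by rewrite ltn_mod N_gt0.
Qed.

Lemma mem_cyc (i : nat) (x : F) : (i < 4)%N ->
  (x \in cyclass w 4 i) = (x != 0) && (lg x %% 4 == i)%N.
Proof.
move=> i4. rewrite /cyclass inE.
have d4 := dvd4N.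
have [->|x0] := eqVneq x 0.
  apply/existsP => -[k /eqP] /esym /eqP. by rewrite expf_eq0 (negbTE w_neq0) andbF.
have [h1 h2] := lgP x0. rewrite /=.
apply/existsP/eqP => [[k /eqP]|H].
  rewrite -{1}h1 => /eqP. rewrite (eq_prim_root_expr hw) => /eqP H.
  rewrite -(modn_dvdm _ d4) H (modn_dvdm _ d4). lia.
have hlt : (lg x %/ 4 < #|F|)%N.
  rewrite hF. have := q_pos. move: h2. rewrite hF. lia.
exists (Ordinal hlt). rewrite -{1}h1 /=.
by rewrite {1}(divn_eq (lg x) 4) H mulnC.
Qed.


Lemma memD0 (x : F) : (x \in Dcl w 0) = (x != 0) && (lg x %% 4 < 2)%N.
Proof.
rewrite /Dcl inE !mem_cyc //.
case: (x != 0) => //=. have := ltn_pmod (lg x) (isT : (0 < 4)%N). lia.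
Qed.

Lemma memD2 (x : F) : (x \in Dcl w 2) = (x != 0) && (2 <= lg x %% 4)%N.
Proof.
rewrite /Dcl inE !mem_cyc //.
case: (x != 0) => //=. have := ltn_pmod (lg x) (isT : (0 < 4)%N). lia.
Qed.

Lemma sum_exp (f : F -> int) :
  \sum_(x : F) f x = f 0 + \sum_(j < N) f (w ^+ j).
Proof.
rewrite (bigD1 0) //=; congr (_ + _).
have inj : {in [set: 'I_N] &, injective (fun j : 'I_N => w ^+ j)}.
  move=> i j _ _ /eqP. rewrite (eq_prim_root_expr hw) !modn_small //.
  by move/eqP/val_inj.
rewrite [RHS](eq_bigl (fun j => j \in [set: 'I_N])); last by move=> j; rewrite inE.
rewrite -(big_imset _ inj) /=. apply: eq_bigl => x.
suff -> : [set w ^+ (nat_of_ord x0) | x0 in [set: 'I_N]] = [set~ 0] by rewrite !inE.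
apply/eqP; rewrite eqEcard; apply/andP; split.
  apply/subsetP => y /imsetP [j _ ->]. by rewrite !inE expf_neq0 // w_neq0.
by rewrite cardsC1 (card_in_imset inj) cardsT card_ord.
Qed.

Lemma sum_per (d M : nat) (f : nat -> int) :
  \sum_(0 <= j < d * M) f (j %% d)%N = M%:Z * \sum_(0 <= j < d) f j.
Proof.
elim: M => [|M IH]; first by rewrite muln0 big_geq // mul0r.
rewrite (big_cat_nat _ (n := (d * M)%N)) //=; last by rewrite leq_mul2l leqnSn orbT.
rewrite IH. rewrite -{1}(add0n (d * M)%N) big_addn.
have -> : (d * M.+1 - d * M = d)%N by rewrite mulnS addnK.
rewrite (eq_big_nat _ _ (F2 := f)); last first.
  move=> i /andP [_ hi]. by rewrite addnC mulnC modnMDl modn_small.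
by rewrite -addn1 PoszD mulrDl mul1r.
Qed.


Local Notation r := (N %/ 4)%N.
Local Notation sI := (grset (Dcl w 0)).

Lemma N4 : N = (4 * r)%N.
Proof. by rewrite mulnC divnK // dvd4N. Qed.

Lemma sum_s : \sum_(x : F) sI x = (2 * r)%N%:Z.
Proof.
rewrite sum_exp {1}/grset memD0 eqxx /= add0r.
rewrite (eq_bigr (fun j : 'I_N => ((j %% 4 < 2)%N : nat)%:Z)); last first.
  move=> j _. by rewrite /grset memD0 expf_neq0 ?w_neq0 // lg_exp.
rewrite -(big_mkord xpredT (fun j => ((j %% 4 < 2)%N : nat)%:Z)).
rewrite [in X in \sum_(0 <= _ < X) _]N4 (sum_per 4 r (fun j => ((j < 2)%N : nat)%:Z)).
rewrite big_mkord !big_ord_recr big_ord0 /=. lia.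
Qed.

Lemma N8 : N = (8 * (((q - 1) %/ 2) * ((q + 1) %/ 4)))%N.
Proof.
have e1 : (q - 1 = 2 * ((q - 1) %/ 2))%N by lia.
have e2 := q1_eq.
rewrite N_eq; move: e1 e2.
set b := ((q - 1) %/ 2)%N; set a := ((q + 1) %/ 4)%N. move=> -> ->. nia.
Qed.

Lemma w_half : w ^+ (4 * (((q - 1) %/ 2) * ((q + 1) %/ 4)))%N = -1.
Proof.
set h := (4 * _)%N.
have hN : N = (h * 2)%N by rewrite N8 /h; lia.
have h1 : (w ^+ h) ^+ 2 = 1 by rewrite -exprM -hN prim_expr_order.
have h2 : w ^+ h != 1.
  rewrite -(prim_order_dvd hw). apply/negP => /dvdn_leq.
  have : (0 < h)%N by have := N_gt0; lia.
  move=> hpos /(_ hpos). lia.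
move/eqP: h1. rewrite -subr_eq0 subr_sqr_1 mulf_eq0 subr_eq0 (negbTE h2) /=.
by rewrite addr_eq0 => /eqP.
Qed.

Lemma s_opp (x : F) : (- x \in Dcl w 0) = (x \in Dcl w 0).
Proof.
rewrite !memD0 oppr_eq0. have [->|x0] //= := eqVneq x 0.
rewrite -mulN1r -w_half lgM ?expf_neq0 ?w_neq0 //.
rewrite lg_exp; last first.
  move: (N8) (N_gt0). move: (((q - 1) %/ 2) * ((q + 1) %/ 4))%N => c. lia.
rewrite (modn_dvdm _ dvd4N). by rewrite -modnDml mulnC modnMl add0n.
Qed.


Definition inK (x : F) := x ^+ q == x.

Lemma q_ge3 : (3 <= q)%N. Proof. lia. Qed.

Lemma inK_alt {x : F} : x != 0 -> inK x = (x ^+ (q - 1) == 1).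
Proof.
move=> x0. rewrite /inK.
have -> : x ^+ q = x ^+ (q - 1) * x by rewrite -exprSr; congr (_ ^+ _); have := q_ge3; lia.
apply/eqP/eqP => [H|->]; last by rewrite mul1r.
by apply: (mulIf x0); rewrite H mul1r.
Qed.

Lemma inK_lg {x : F} : x != 0 -> inK x = (q + 1 %| lg x)%N.
Proof.
move=> x0. rewrite inK_alt //. have [h1 _] := lgP x0.
rewrite -{1}h1 -exprM -(prim_order_dvd hw) N_eq mulnC.
by rewrite dvdn_pmul2r //; have := q_ge3; lia.
Qed.

Lemma charF : p \in [char F].
Proof. apply: (card_finPcharP (n := (kk * 2)%N)) => //. by rewrite hF hqp expnM. Qed.

Lemma frobD (x y : F) : (x + y) ^+ q = x ^+ q + y ^+ q.
Proof.
apply: exprDn_pchar. rewrite hqp pnatX (pnatE _ hp). by rewrite charF.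
Qed.

Lemma q_odd : odd q. Proof. rewrite (divn_eq q 4) hq4 oddD oddM /=. by rewrite andbF. Qed.

Lemma inKB (x y : F) : inK x -> inK y -> inK (x - y).
Proof.
rewrite /inK => /eqP hx /eqP hy. rewrite frobD hx -mulN1r exprMn hy -signr_odd q_odd.
by rewrite expr1 mulN1r.
Qed.

Lemma inK0 : inK 0. Proof. by rewrite /inK expr0n; have := q_ge3; case: q. Qed.
Lemma inK1 : inK 1. Proof. by rewrite /inK expr1n. Qed.
Lemma inKN (x : F) : inK x -> inK (- x). Proof. move=> h. by rewrite -sub0r inKB // inK0. Qed.
Lemma inKD (x y : F) : inK x -> inK y -> inK (x + y).
Proof. move=> hx hy. by rewrite -(opprK y) inKB // inKN. Qed.
Lemma inKM (x y : F) : inK x -> inK y -> inK (x * y).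
Proof. rewrite /inK => /eqP hx /eqP hy. by rewrite exprMn hx hy. Qed.
Lemma inKV (x : F) : inK x -> inK (x^-1).
Proof. rewrite /inK => /eqP hx. by rewrite exprVn hx. Qed.


Lemma card_sumZ (T : finType) (A : {set T}) :
  (#|A| : int) = \sum_(x : T) ((x \in A) : nat)%:Z.
Proof.
rewrite -sum1_card -natz natr_sum big_mkcond /=. apply: eq_bigr => x _. by case: (x \in A).
Qed.

Lemma sum_eq1 (T : finType) (a : T) : \sum_(x : T) ((x == a) : nat)%:Z = 1.
Proof.
rewrite (bigD1 a) //= eqxx big1 ?addr0 // => x /negbTE ->. by [].
Qed.

Lemma cardK : #|[set x : F | inK x]| = q.
Proof.
suff : (#|[set x : F | inK x]| : int) = q%:Z by case.
rewrite card_sumZ sum_exp inE inK0 /=.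
rewrite (eq_bigr (fun j : 'I_N => ((j %% (q + 1) == 0)%N : nat)%:Z)); last first.
  move=> j _. by rewrite inE inK_lg ?expf_neq0 ?w_neq0 // lg_exp.
rewrite -(big_mkord xpredT (fun j => ((j %% (q + 1) == 0)%N : nat)%:Z)).
rewrite [in X in \sum_(0 <= _ < X) _]N_eq mulnC.
rewrite (sum_per (q + 1) (q - 1) (fun j => ((j == 0)%N : nat)%:Z)).
rewrite big_ltn ?addn1 // big_nat_cond big1 /=; last first.
  by move=> i /andP [/andP [hi _] _]; case: i hi.
have := q_ge3. lia.
Qed.


Definition ell (x : F) := (lg x %% q.+1)%N.

Lemma ell_lt (x : F) : (ell x < q.+1)%N. Proof. by rewrite /ell ltn_mod. Qed.

Lemma line_pow {x : F} : x != 0 -> x ^+ (q - 1) = w ^+ (ell x * (q - 1)).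
Proof.
move=> x0. have [h1 _] := lgP x0.
have hq1 : (0 < q - 1)%N by have := q_ge3; lia.
rewrite -{1}h1 -exprM -(prim_expr_mod hw) /ell muln_modl.
suff -> : N = (q.+1 * (q - 1))%N by []. by rewrite N_eq mulnC addn1.
Qed.

Lemma line_eq {x y : F} : x != 0 -> y != 0 -> ell x = ell y -> inK (x / y).
Proof.
move=> x0 y0 e. rewrite inK_alt ?mulf_neq0 ?invr_eq0 //.
by rewrite exprMn exprVn (line_pow x0) (line_pow y0) e mulfV // expf_neq0 // w_neq0.
Qed.

Lemma ell0 {x : F} : x != 0 -> (ell x == 0)%N = inK x.
Proof. move=> x0. by rewrite inK_lg // /dvdn /ell addn1. Qed.

Lemma s_line (g t : F) : g != 0 -> t != 0 ->
  (g * t \in Dcl w 0) = ((lg g + ell t) %% 4 < 2)%N.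
Proof.
move=> g0 t0. rewrite memD0 mulf_neq0 //= lgM // (modn_dvdm _ dvd4N).
by rewrite -modnDmr -(modn_dvdm (lg t) dvd_q1) modnDmr /ell addn1.
Qed.

Lemma sK (c x : F) : inK c -> c != 0 -> (c * x \in Dcl w 0) = (x \in Dcl w 0).
Proof.
move=> hc c0. have [->|x0] := eqVneq x 0; first by rewrite mulr0.
rewrite !memD0 mulf_neq0 //= lgM // (modn_dvdm _ dvd4N).
move: hc; rewrite inK_lg // => /(dvdn_trans dvd_q1) /dvdnP [m ->].
by rewrite -modnDml modnMl add0n x0.
Qed.


Definition NK : {set F} := ~: [set x : F | inK x].
Definition Phi (t : F) : 'I_q.+1 * 'I_q.+1 := (inord (ell t), inord (ell (t - 1))).

Lemma NK_nz {t : F} : t \in NK -> (t != 0) /\ (t - 1 != 0) /\ ~~ inK (t - 1).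
Proof.
rewrite !inE => ht. split; first by apply: contraNneq ht => ->; exact: inK0.
have h : ~~ inK (t - 1).
  apply: contra ht => h. by rewrite -(subrK 1 t) inKD // inK1.
split=> //. by apply: contraNneq h => ->; exact: inK0.
Qed.

Lemma inKdiv (x y : F) : inK x -> inK y -> inK (x / y).
Proof. move=> hx hy. by rewrite inKM // inKV. Qed.

Lemma Phi_inj : {in NK &, injective Phi}.
Proof.
move=> t t' ht ht' [] e1 e2.
have [t0 [t10 _]] := NK_nz ht. have [t0' [t10' _]] := NK_nz ht'.
move: e1 e2 => /(congr1 val) e1 /(congr1 val) e2.
rewrite /= !inordK ?ell_lt // in e1 e2.
have hc := line_eq t0' t0 (esym e1). have hd := line_eq t10' t10 (esym e2).
set c := t' / t in hc. set d := (t' - 1) / (t - 1) in hd.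
have Et : t' = c * t by rewrite /c divfK.
have Ed : t' - 1 = d * (t - 1) by rewrite /d divfK.
have key : (c - d) * t = 1 - d.
  have H : c * t - 1 = d * t - d by rewrite -Et Ed mulrBr mulr1.
  apply/eqP; rewrite -subr_eq0.
  have -> : (c - d) * t - (1 - d) = (c * t - 1) - (d * t - d) by ring.
  by rewrite H subrr.
have [cd|cd] := eqVneq c d.
  move: key. rewrite cd subrr mul0r => /esym /eqP. rewrite subr_eq0 => /eqP d1.
  by rewrite Et cd -d1 mul1r.
exfalso. have : inK t.
  have -> : t = (1 - d) / (c - d) by rewrite -key mulrC mulKf // subr_eq0.
  by apply: inKdiv; apply: inKB => //; exact: inK1.
by move: ht; rewrite !inE => /negP.
Qed.


Lemma inord_neq (a b : nat) : (a < q.+1)%N -> (b < q.+1)%N -> a <> b ->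
  (inord a : 'I_q.+1) != inord b.
Proof.
move=> ha hb ne. apply/eqP => /(congr1 val). rewrite /= !inordK //.
Qed.

Lemma Phi_T (t : F) : t \in NK -> Phi t \in Tset q.
Proof.
move=> ht. have [t0 [t10 nK1]] := NK_nz ht.
have nK : ~~ inK t by move: ht; rewrite !inE.
rewrite inE /=.
have h0 : (ord0 : 'I_q.+1) = inord 0 by apply: val_inj; rewrite /= inordK.
rewrite h0 !inord_neq ?ell_lt //.
- move=> e. have := line_eq t10 t0 (esym e). set c := (t - 1) / t => hc.
  have Ec : t - 1 = c * t by rewrite /c divfK.
  have c1 : 1 - c != 0.
    rewrite subr_eq0; apply/eqP => c1. move: Ec. rewrite -c1 mul1r => /eqP.
    by rewrite -subr_eq0 addrAC subrr sub0r oppr_eq0 oner_eq0.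
  have : t = 1 / (1 - c).
    apply: (mulIf c1). rewrite divfK // mulrBr mulr1 [t * c]mulrC -Ec.
    by rewrite opprB addrC subrK.
  move=> Et. move: nK; rewrite Et => /negP; apply.
  by apply: inKdiv; [exact: inK1 | apply: inKB => //; exact: inK1].
- move=> /eqP. by rewrite ell0 // (negbTE nK1).
- move=> /eqP. by rewrite ell0 // (negbTE nK).
Qed.


Lemma sum1_ord n : \sum_(a : 'I_n) (1:int) = n%:Z.
Proof.
rewrite (eq_bigr (fun a => ((a \in [set: 'I_n]) : nat)%:Z)); last by move=> a _; rewrite inE.
by rewrite -card_sumZ cardsT card_ord.
Qed.

Lemma sum_nz1 : \sum_(a : 'I_q.+1 | a != ord0) (1:int) = q%:Z.
Proof.
have := sum1_ord q.+1. rewrite (bigD1 ord0) //= => /(congr1 (fun v => v - 1)).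
rewrite [1 + _]addrC addrK => ->; lia.
Qed.

Lemma cardT : (#|Tset q| : int) = q%:Z ^+ 2 - q%:Z.
Proof.
rewrite -sum1_card -natz natr_sum.
transitivity (\sum_(ab in Tset q) (fun _ : 'I_q.+1 => (1:int)) ab.1 * (fun _ : 'I_q.+1 => (1:int)) ab.2).
  by apply: eq_bigr => ab _; rewrite mulr1.
by rewrite (pair_sum q (fun _ => 1)) /= sum_nz1.
Qed.

Lemma cardNK : (#|NK| : int) = q%:Z ^+ 2 - q%:Z.
Proof.
have := cardsC [set x : F | inK x]. rewrite cardK hF -/NK => H.
have -> : #|NK| = (q ^ 2 - q)%N by lia.
rewrite -natz natrB ?natz ?natrX //. have := q_pos. nia.
Qed.

Lemma imPhi : Phi @: NK = Tset q.
Proof.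
apply/eqP; rewrite eqEcard; apply/andP; split.
  apply/subsetP => ab /imsetP [t ht ->]. exact: Phi_T.
rewrite (card_in_imset Phi_inj).
have : (#|Tset q| : int) = #|NK| by rewrite cardT cardNK.
by case=> ->.
Qed.


Definition uu (L : nat) (a : 'I_q.+1) : int := (((L + a) %% 4 < 2)%N : nat)%:Z.

Lemma sum4 L : \sum_(0 <= b < 4) (((L + b) %% 4 < 2)%N : nat)%:Z = 2.
Proof.
rewrite !big_nat_recr //= big_geq // add0r.
rewrite -!(modnDml L) addn0.
have := ltn_pmod L (isT : (0 < 4)%N).
by case: (L %% 4)%N => [|[|[|[|]]]].
Qed.

Lemma sum_uu L : \sum_(a : 'I_q.+1) uu L a = (2 * ((q + 1) %/ 4))%N%:Z.
Proof.
rewrite /uu -(big_mkord xpredT (fun a => (((L + a) %% 4 < 2)%N : nat)%:Z)).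
have e : q.+1 = (4 * ((q + 1) %/ 4))%N by rewrite -addn1 -q1_eq.
rewrite e (eq_big_nat _ _ (F2 := fun j => (((L + (j %% 4)) %% 4 < 2)%N : nat)%:Z)); last first.
  by move=> j _; rewrite modnDmr.
rewrite (sum_per 4 _ (fun j => (((L + j) %% 4 < 2)%N : nat)%:Z)) sum4. lia.
Qed.


Lemma sI0 : sI 0 = 0. Proof. by rewrite /grset memD0 eqxx. Qed.

Lemma sumK1 : \sum_(t | inK t) (1:int) = q%:Z.
Proof.
transitivity (\sum_(t in [set x | inK x]) (1:int)); first by apply: eq_bigl => t; rewrite inE.
by rewrite sumr_const cardK natz.
Qed.

Lemma sumK_eq (a : F) : inK a -> \sum_(t | inK t) ((t == a) : nat)%:Z = 1.
Proof.
move=> ha. rewrite (bigD1 a) //= eqxx big1 ?addr0 // => t /andP [_ /negbTE ->]. by [].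
Qed.

Lemma hr : r = ((q - 1) * ((q + 1) %/ 4))%N.
Proof.
set r' := r. have := N4. rewrite -/r' N_eq {1}q1_eq mulnCA => /eqP.
by rewrite eqn_mul2l /= => /eqP.
Qed.

Lemma P_nz (g : F) : g != 0 ->
  \sum_(x : F) sI x * sI (x - g) = r%:Z - sI g.
Proof.
move=> g0.
rewrite (reindex_inj (mulfI g0)) /=.
rewrite (eq_bigr (fun t => sI (g * t) * sI (g * (t - 1)))); last by move=> t _; rewrite mulrBr mulr1.
rewrite (bigID inK) /=.
have hK : \sum_(t | inK t) sI (g * t) * sI (g * (t - 1)) = sI g * (q%:Z - 2).
  rewrite (eq_bigr (fun t => sI g * (1 - ((t == 0) : nat)%:Z - ((t == 1) : nat)%:Z))); last first.
    move=> t ht. have [->|t0] := eqVneq t 0.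
      rewrite mulr0 sI0 !mul0r (eq_sym 0 1) oner_eq0 /=. lia.
    have [->|t1] := eqVneq t 1.
      rewrite subrr mulr0 sI0 mulr0 /=. lia.
    have ht1 : inK (t - 1) by apply: inKB => //; exact: inK1.
    have t10 : t - 1 != 0 by rewrite subr_eq0.
    rewrite [g * t]mulrC [g * (t - 1)]mulrC /grset !sK // /=.
    by case: (g \in Dcl w 0).
  rewrite -mulr_sumr !sumrB sumK1 sumK_eq ?inK0 // sumK_eq ?inK1 //.
  congr (_ * _). lia.
have hNK : \sum_(t | ~~ inK t) sI (g * t) * sI (g * (t - 1)) =
    \sum_(ab in Tset q) uu (lg g) ab.1 * uu (lg g) ab.2.
  rewrite -imPhi big_imset /=; last exact: Phi_inj.
  apply: eq_big => t; first by rewrite !inE.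
  move=> ht. have nt : t \in NK by rewrite !inE. have [t0 [t10 _]] := NK_nz nt.
  by rewrite /uu /= !inordK ?ell_lt // /grset !s_line.
rewrite hK hNK pair_sum.
have hU : \sum_(a | a != ord0) uu (lg g) a = (2 * ((q + 1) %/ 4))%N%:Z - sI g.
  have H := sum_uu (lg g). rewrite (bigD1 ord0) //= in H. rewrite -H.
  have -> : sI g = uu (lg g) ord0 by rewrite /uu /grset memD0 g0 /= addn0.
  by rewrite [uu (lg g) ord0 + _]addrC addrK.
have hsq : \sum_(a | a != ord0) uu (lg g) a ^+ 2 = \sum_(a | a != ord0) uu (lg g) a.
  by apply: eq_bigr => a _; rewrite /uu; case: (_ < _)%N.
rewrite hsq hU hr.
have := q1_eq. move: ((q + 1) %/ 4)%N => A hA.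
rewrite /grset; case: (g \in Dcl w 0) => /=.
- nia.
- nia.
Qed.


Local Notation z := (@grzero F).

Lemma shiftF (f : F -> int) (y : F) : \sum_(x : F) f (x - y) = \sum_(x : F) f x.
Proof. rewrite (reindex_inj (addIr y)) /=. apply: eq_bigr => x _. by rewrite addrK. Qed.

Lemma sum1F : \sum_(x : F) (1 : int) = #|F|%:Z.
Proof.
rewrite (eq_bigr (fun a => ((a \in [set: F]) : nat)%:Z)); last by move=> a _; rewrite inE.
by rewrite -card_sumZ cardsT.
Qed.

Lemma sum_sz (y : F) : \sum_(x : F) sI x * z (x - y) = sI y.
Proof.
rewrite (bigD1 y) //= /grzero subrr eqxx mulr1 big1 ?addr0 //.
move=> x /negbTE h. by rewrite subr_eq0 h mulr0.
Qed.

Lemma sum_zs (y : F) : \sum_(x : F) z x * sI (x - y) = sI y.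
Proof.
rewrite (bigD1 0) //= /grzero eqxx mul1r big1 ?addr0.
  by rewrite sub0r /grset s_opp.
move=> x /negbTE h. by rewrite h mul0r.
Qed.

Lemma sum_zz (y : F) : \sum_(x : F) z x * z (x - y) = z y.
Proof.
rewrite (bigD1 0) //= /grzero eqxx mul1r big1 ?addr0.
  by rewrite sub0r oppr_eq0.
move=> x /negbTE h. by rewrite h mul0r.
Qed.

Lemma comb (y : F) (c1 c2 c3 c4 c5 c6 c7 c8 c9 : int) :
  \sum_(x : F) (c1 * 1 + c2 * sI x + c3 * sI (x - y) + c4 * z x + c5 * z (x - y)
     + c6 * (sI x * sI (x - y)) + c7 * (sI x * z (x - y)) + c8 * (z x * sI (x - y))
     + c9 * (z x * z (x - y)))
  = c1 * #|F|%:Z + c2 * (2 * r)%N%:Z + c3 * (2 * r)%N%:Z + c4 + c5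
    + c6 * (\sum_(x : F) sI x * sI (x - y)) + c7 * sI y + c8 * sI y + c9 * z y.
Proof.
rewrite !big_split /= -!mulr_sumr.
rewrite sum1F sum_s (shiftF sI) sum_s sum_sz sum_zs sum_zz.
rewrite (shiftF z) /grzero sum_eq1. by rewrite !mulr1.
Qed.


Lemma conv_split (a b : G2 F -> int) (e : 'Z_2) (y : F) :
  grmul a (grinv b) (e, y) =
  \sum_(x : F) a (0, x) * b (0 - e, x - y) + \sum_(x : F) a (1, x) * b (1 - e, x - y).
Proof. rewrite /grmul /grinv splitG2; congr (_ + _); apply: eq_bigr => x _; by rewrite opprB. Qed.

Lemma gB00 (x : F) : grset (B0 w) (0, x) = sI x.
Proof. by rewrite /grset B0m0. Qed.
Lemma gB01 (x : F) : grset (B0 w) (1, x) = 1 - sI x.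
Proof. rewrite /grset B0m1. by case: (x \in Dcl w 0). Qed.
Lemma gB1 (a : 'Z_2) (x : F) : grset (B1 w) (a, x) = 1 - sI x - z x.
Proof.
rewrite /grset B1m memD2 memD0 /grzero.
have [->|x0] := eqVneq x 0; first by [].
by case: (ltnP (lg x %% 4) 2) => _ /=; lia.
Qed.

Lemma P0 : \sum_(x : F) sI x * sI (x - 0) = (2 * r)%N%:Z.
Proof.
rewrite -sum_s. apply: eq_bigr => x _. rewrite subr0 /grset. by case: (_ \in _).
Qed.

Lemma z21 : (0 - 1 : 'Z_2) = 1. Proof. by apply: val_inj. Qed.


Lemma gD2 (x : F) : grset (Dcl w 2) x = 1 - sI x - z x.
Proof.
rewrite /grset memD2 memD0 /grzero.
have [->|x0] := eqVneq x 0; first by [].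
by case: (ltnP (lg x %% 4) 2) => _ /=; lia.
Qed.

Lemma hn : (#|F| = 4 * r + 1)%N.
Proof. have := N4. have := N_gt0. lia. Qed.

Lemma final_eq (g : G2 F) :
    gradd (grmul (grset (B0 w)) (grinv (grset (B0 w))))
          (grmul (grset (B1 w)) (grinv (grset (B1 w)))) g
    = gradd
        (grembed 0 (gradd (grscale ((q ^ 2)%:Z - 2) (grset [set~ (0 : F)]))
                          (grscale (2 * (q ^ 2)%:Z - 1) (@grzero F))))
        (grembed 1 (gradd (gradd (grscale 2 (grset (Dcl w 0)))
                                 (grscale (-2) (grset (Dcl w 2))))
                          (grscale ((q ^ 2)%:Z - 1) (grset [set: F]))))
        g.
Proof.
case: g => e y.
have hn' := hn.
have [-> | ->] : e = 0 \/ e = 1 by case: e => -[|[|//]] ?; [left|right]; apply: val_inj.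
- rewrite /gradd !conv_split subrr subr0.
  rewrite -!big_split /=.
  rewrite (eq_bigr (fun x => 3 * 1 + (-3) * sI x + (-3) * sI (x - y) + (-2) * z x + (-2) * z (x - y)
     + 4 * (sI x * sI (x - y)) + 2 * (sI x * z (x - y)) + 2 * (z x * sI (x - y))
     + 2 * (z x * z (x - y)))); last first.
    move=> x _. rewrite !gB00 !gB01 !gB1. ring.
  rewrite comb.
  have [->|y0] := eqVneq y 0.
    rewrite P0 /grembed /= /grscale /gradd /grset in_setC1 -hF memD0 /grzero !eqxx /=.
    move: hn'. set n := #|F|. set R := (n.-1 %/ 4)%N. clearbody R n. move=> ->. ring.
  rewrite P_nz // /grembed /= /grscale /gradd /grset in_setC1 -hF /grzero (negbTE y0) /=.
  move: hn'. set n := #|F|. set R := (n.-1 %/ 4)%N. clearbody R n. move=> ->. ring.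
- rewrite /gradd !conv_split z21 subrr.
  rewrite -!big_split /=.
  rewrite (eq_bigr (fun x => 2 * 1 + (-1) * sI x + (-1) * sI (x - y) + (-2) * z x + (-2) * z (x - y)
     + 0 * (sI x * sI (x - y)) + 2 * (sI x * z (x - y)) + 2 * (z x * sI (x - y))
     + 2 * (z x * z (x - y)))); last first.
    move=> x _. rewrite !gB00 !gB01 !gB1. ring.
  rewrite comb /grembed /= /grscale /gradd gD2 /grset in_setT -hF mul0r.
  move: hn'. set n := #|F|. set R := (n.-1 %/ 4)%N. clearbody R n. move=> -> /=. ring.
Qed.


Lemma cardB0 : #|B0 w| = (q ^ 2)%N.
Proof.
suff : (#|B0 w| : int) = #|F| by rewrite hF; case.
rewrite card_sumZ splitG2.
rewrite (eq_bigr (fun x => sI x)); last by move=> x _; exact: gB00.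
rewrite [X in _ + X](eq_bigr (fun x => 1 - sI x)); last by move=> x _; exact: gB01.
rewrite sumrB sum1F sum_s. ring.
Qed.

Lemma cardB1 : #|B1 w| = (q ^ 2 - 1)%N.
Proof.
suff : (#|B1 w| : int) = (4 * r)%N by case=> ->; rewrite -N4 hF subn1.
rewrite card_sumZ splitG2.
rewrite (eq_bigr (fun x => 1 - sI x - z x)); last by move=> x _; exact: gB1.
rewrite [X in _ + X](eq_bigr (fun x => 1 - sI x - z x)); last by move=> x _; exact: gB1.
rewrite !sumrB sum1F sum_s /grzero sum_eq1.
move: hn. set n := #|F|. set R := (n.-1 %/ 4)%N. clearbody R n. move=> -> /=. ring.
Qed.

End Main.

Theorem proposition2p2 (q : nat) (F : finFieldType) (w : F)
  (hq : exists p k : nat, [/\ prime p, (0 < k)%N & q = (p ^ k)%N])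
  (hq4 : (q %% 4 = 3)%N)
  (hF : #|F| = (q ^ 2)%N)
  (hw : (#|F|.-1).-primitive_root w) :
  #|B0 w| = (q ^ 2)%N /\ #|B1 w| = (q ^ 2 - 1)%N /\
  forall g : G2 F,
    gradd (grmul (grset (B0 w)) (grinv (grset (B0 w))))
          (grmul (grset (B1 w)) (grinv (grset (B1 w)))) g
    = gradd
        (grembed 0 (gradd (grscale ((q ^ 2)%:Z - 2) (grset [set~ (0 : F)]))
                          (grscale (2 * (q ^ 2)%:Z - 1) (@grzero F))))
        (grembed 1 (gradd (gradd (grscale 2 (grset (Dcl w 0)))
                                 (grscale (-2) (grset (Dcl w 2))))
                          (grscale ((q ^ 2)%:Z - 1) (grset [set: F]))))
        g.
Proof.
have [p [kk [hp hk hqp]]] := hq.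
split; first exact: (@cardB0 q F w p kk hp hk hqp hq4 hF hw).
split; first exact: (@cardB1 q F w p kk hp hk hqp hq4 hF hw).
move=> g. exact: (@final_eq q F w p kk hp hk hqp hq4 hF hw).
Qed.
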